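(* Let $A$ be a finite-dimensional associative algebra over $K=\mathbb{R}$ or $\mathbb{C}$, let $\{\cdot,\cdot\}$ be a quadratic pre-Poisson bracket on $A$ (not necessarily compatible with the multiplication), let $\delta\colon\mathrm{Symm}(A\otimes A)\to A\wedge A\subset A\otimes A$ be the dual of the map $\delta^*\colon A^*\wedge A^*\to\mathrm{Sym}^2(A^* )$ encoding the bracket, and let $\tilde\delta\colon A\otimes A\to A\otimes A$ be an arbitrary linear extension of $\delta$. Then for every fully symmetric tensor $X\in A\otimes A\otimes A$ the value $[[\tilde\delta,\tilde\delta]](X)$ depends only on $\delta$ (not on the chosen extension), and the bracket satisfies the Jacobi identity if and only if $[[\tilde\delta,\tilde\delta]](X)=0$ for every fully symmetric $X\in A\otimes A\otimes A$.
   Context: A pre-Poisson bracket on $A$ is a bilinear skew-symmetric map on $C^\infty(A)$ satisfying the Leibniz rule; it is quadratic if the bracket of two linear functions (elements of $A^*$) is a homogeneous quadratic function (element of $\mathrm{Sym}^2(A^* )$); it is then encoded by $\delta^*(\xi\wedge\eta)=\{\xi,\eta\}$, and $\delta$ is the dual map under the natural identifications of $\mathrm{Symm}(A\otimes A)$ with $(\mathrm{Sym}^2A^* )^*$ and $A\wedge A$ with $(A^*\wedge A^* )^*$. For a linear operator $P$ on $V\otimes V$, $P^{12}$ denotes the operator on $V\otimes V\otimes V$ acting as $P$ on the first two factors and as the identity on the third; $P^{13},P^{23}$ are defined similarly. The Schouten bracket is the operator $[[P,P]]=[P^{12},P^{13}]+[P^{12},P^{23}]+[P^{13},P^{23}]$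 on $V^{\otimes3}$, where $[\cdot,\cdot]$ is the commutator of operators. *)

(* Defs.v *)
From HB Require Import structures.
From mathcomp Require Import all_boot all_order all_algebra.
From mathcomp Require Import mpoly.
Set Implicit Arguments. Unset Strict Implicit. Unset Printing Implicit Defensive.
Import Order.TTheory GRing.Theory Num.Theory.
Local Open Scope ring_scope.

(* Coordinates: A = K^n with its standard basis e_0..e_{n-1};
   A^* has dual basis x_i = 'X_i (coordinate functions);
   functions on A are modelled by polynomial functions {mpoly K[n]};
   A (x) A   ~ 'M[K]_n          (T = sum_{ij} T i j e_i (x) e_j);
   A (x) A (x) A ~ 'I_n -> 'I_n -> 'I_n -> K. *)

Definition tensor3 (K : Type) (n : nat) := 'I_n -> 'I_n -> 'I_n -> K.

Definition assoc_algebra (K : numFieldType) (n : nat)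
    (mul : 'rV[K]_n -> 'rV[K]_n -> 'rV[K]_n) : Prop :=
  [/\ forall a u v w, mul (a *: u + v) w = a *: mul u w + mul v w,
      forall a u v w, mul u (a *: v + w) = a *: mul u v + mul u w
    & forall u v w, mul (mul u v) w = mul u (mul v w)].

Definition pre_poisson (K : numFieldType) (n : nat)
    (br : {mpoly K[n]} -> {mpoly K[n]} -> {mpoly K[n]}) : Prop :=
  [/\ forall a f g h, br (a *: f + g) h = a *: br f h + br g h,
      forall f g, br f g = - br g f
    & forall f g h, br (f * g) h = f * br g h + g * br f h].

Definition quadratic_bracket (K : numFieldType) (n : nat)
    (br : {mpoly K[n]} -> {mpoly K[n]} -> {mpoly K[n]}) : Prop :=
  forall p q : {mpoly K[n]}, p \is 1.-homog -> q \is 1.-homog ->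
    br p q \is 2.-homog.

Definition jacobi (K : numFieldType) (n : nat)
    (br : {mpoly K[n]} -> {mpoly K[n]} -> {mpoly K[n]}) : Prop :=
  forall f g h, br f (br g h) + br g (br h f) + br h (br f g) = 0.

Definition sym2 (K : Type) (n : nat) (S : 'M[K]_n) : Prop :=
  forall i j, S i j = S j i.

Definition sym3 (K : Type) (n : nat) (X : tensor3 K n) : Prop :=
  forall i j k, X i j k = X j i k /\ X i j k = X i k j.

(* Natural pairing Sym^2(A^* ) x Symm(A (x) A) -> K:
   <q, S> = sum_{k,l} S k l * B_q(e_k, e_l), with B_q the polarization of q,
   B_q(e_k,e_l) = (1/2) d_k d_l q. *)
Definition pair_sym (K : numFieldType) (n : nat) (q : {mpoly K[n]}) (S : 'M[K]_n) : K :=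
  \sum_(k < n) \sum_(l < n) S k l * ((mderiv k (mderiv l q))@_0%MM / 2%:R).

(* delta : Symm(A (x) A) -> A /\ A, dual to delta^*(x_i /\ x_j) = {x_i, x_j},
   with A /\ A ~ (A^* /\ A^* )^* via <xi /\ eta, W> = W(xi, eta), i.e.
   <x_i /\ x_j, W> = W i j. *)
Definition delta (K : numFieldType) (n : nat)
    (br : {mpoly K[n]} -> {mpoly K[n]} -> {mpoly K[n]}) (S : 'M[K]_n) : 'M[K]_n :=
  \matrix_(i, j) pair_sym (br 'X_i 'X_j) S.

Definition extends_delta (K : numFieldType) (n : nat)
    (br : {mpoly K[n]} -> {mpoly K[n]} -> {mpoly K[n]})
    (D : {linear 'M[K]_n -> 'M[K]_n}) : Prop :=
  forall S, sym2 S -> D S = delta br S.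

Definition op12 (K : numFieldType) (n : nat) (P : 'M[K]_n -> 'M[K]_n)
  (X : tensor3 K n) : tensor3 K n :=
  fun a b c => P (\matrix_(i, j) X i j c) a b.
Definition op13 (K : numFieldType) (n : nat) (P : 'M[K]_n -> 'M[K]_n)
  (X : tensor3 K n) : tensor3 K n :=
  fun a b c => P (\matrix_(i, k) X i b k) a c.
Definition op23 (K : numFieldType) (n : nat) (P : 'M[K]_n -> 'M[K]_n)
  (X : tensor3 K n) : tensor3 K n :=
  fun a b c => P (\matrix_(j, k) X a j k) b c.

Definition comm3 (K : numFieldType) (n : nat) (F G : tensor3 K n -> tensor3 K n)
  (X : tensor3 K n) : tensor3 K n :=
  fun a b c => F (G X) a b c - G (F X) a b c.

Definition schouten (K : numFieldType) (n : nat) (P : 'M[K]_n -> 'M[K]_n)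
  (X : tensor3 K n) : tensor3 K n :=
  fun a b c => comm3 (op12 P) (op13 P) X a b c + comm3 (op12 P) (op23 P) X a b c
             + comm3 (op13 P) (op23 P) X a b c.

(* Main.v *)
Require Import Defs.
From HB Require Import structures.
From mathcomp Require Import all_boot all_order all_algebra.
From mathcomp Require Import mpoly.
From mathcomp Require Import ring.
Set Implicit Arguments. Unset Strict Implicit. Unset Printing Implicit Defensive.
Import Order.TTheory GRing.Theory Num.Theory.
Local Open Scope ring_scope.

Section MP.
Variables (K : numFieldType) (n : nat).
Local Notation P := {mpoly K[n]}.

Lemma c0C (c : K) : (c%:MP : P)@_0 = c.
Proof. by rewrite mcoeffC eqxx mulr1. Qed.

Lemma c0M (p q : P) : (p * q)@_0 = p@_0 * q@_0.
Proof. by case: (@mcoeff0_is_multiplicative n K) => h _; apply: h. Qed.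

Lemma U_neq0 (i : 'I_n) : (U_(i) != 0 :> 'X_{1..n})%MM.
Proof. by rewrite -mdeg_eq0 mdeg1. Qed.

Lemma c0X (i : 'I_n) : ('X_i : P)@_0 = 0.
Proof. by rewrite mcoeffX (negbTE (U_neq0 i)). Qed.

Lemma dX (i k : 'I_n) : ('X_i : P)^`M(k) = (i == k)%:R%:MP.
Proof.
rewrite mderivX mnm1E; case: (eqVneq i k) => [->|_].
  have -> : (U_(k) - U_(k))%MM = 0%MM :> 'X_{1..n}.
    by apply/mnmP => j; rewrite mnmBE subnn mnm0E.
  by rewrite mpolyX0 scale1r.
by rewrite scale0r.
Qed.

Lemma mdeg_decomp d (m : 'X_{1..n}) : mdeg m = d.+1 ->
  exists i m', m = (m' + U_(i))%MM /\ mdeg m' = d.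
Proof.
move=> hm.
case: (boolP [exists i, m i != 0%N]) => [/existsP [i hi] | /existsPn h]; last first.
  have m0 : m = 0%MM by apply/mnmP => j; rewrite mnm0E; apply/eqP; rewrite -[_ == _]negbK h.
  by move: hm; rewrite m0 mdeg0.
 exists i, (m - U_(i))%MM.
have e : m = (m - U_(i) + U_(i))%MM.
  apply/mnmP => j; rewrite mnmDE mnmBE mnm1E.
  case: (eqVneq i j) => [<-|_] /=; last by rewrite subn0 addn0.
  by rewrite subnK // lt0n.
split=> //; move: hm; rewrite {1}e mdegD mdeg1 addn1; by case.
Qed.

Lemma homog_van d (p : P) : p \is d.-homog ->
  (forall m : 'X_{1..n}, mdeg m = d -> (p^`M[m])@_0 = 0) -> p = 0.
Proof.
move=> hp hd; apply/mpolyP => m; rewrite mcoeff0.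
case: (eqVneq (mdeg m) d) => h; last exact: dhomog_nemf_coeff hp h.
have := hd m h; rewrite mcoeff_mderivm addm0 => /eqP.
rewrite mulrn_eq0 => /orP [|/eqP //].
rewrite eqn0Ngt => /negP; case; apply: prodn_gt0 => i.
by rewrite ffactnn fact_gt0.
Qed.


Lemma sum_delta (F : 'I_n -> K) a : \sum_k F k * (k == a)%:R = F a.
Proof.
rewrite (bigD1 a) //= eqxx mulr1 big1 ?addr0 // => k /negbTE ->.
by rewrite mulr0.
Qed.

Lemma sum2_delta (c : 'I_n -> 'I_n -> K) a b :
  \sum_k \sum_l c k l * ((k == a)%:R * (l == b)%:R) = c a b.
Proof.
rewrite -[RHS](sum_delta (fun k => c k b) a); apply: eq_bigr => k _.
rewrite -(sum_delta (c k) b) mulr_suml; apply: eq_bigr => l _.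
by rewrite mulrA mulrAC.
Qed.

Lemma dsum (F : 'I_n -> P) i :
  (\sum_k F k)^`M(i) = \sum_k (F k)^`M(i).
Proof. exact: (raddf_sum (mderiv i)). Qed.

Lemma csum (F : 'I_n -> P) m :
  (\sum_k F k)@_m = \sum_k (F k)@_m.
Proof. exact: (raddf_sum (mcoeff m)). Qed.

Lemma d2XX (k l i j : 'I_n) :
  ((('X_k * 'X_l : P)^`M(j))^`M(i))@_0 =
  (k == j)%:R * (l == i)%:R + (k == i)%:R * (l == j)%:R.
Proof.
rewrite !mderivM !dX !mderivD !mderivM !dX !mderivC !mcoeffD !c0M !c0C !c0X ?mcoeff0.
ring.
Qed.

Lemma recon2 (q : P) : q \is 2.-homog ->
  q = \sum_k \sum_l (((q^`M(l))^`M(k))@_0 / 2%:R) *: ('X_k * 'X_l).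
Proof.
move=> hq; apply/eqP; rewrite -subr_eq0; apply/eqP; apply: (@homog_van 2).
  rewrite rpredB // rpred_sum // => k _; rewrite rpred_sum // => l _.
  rewrite rpredZ //; have : ('X_k * 'X_l : P) \is (1+1).-homog.
    by apply: dhomogM; rewrite dhomogX; apply/eqP; exact: mdeg1.
  by [].
move=> m hm.
have [i [m1 [-> h1]]] := mdeg_decomp hm.
have [j [m0 [-> h0]]] := mdeg_decomp h1.
have -> : m0 = 0%MM by apply/eqP; rewrite -mdeg_eq0 h0.
rewrite !mderivmDm mderivm0m !mderivmU1m mderivB mderivB mcoeffB.

rewrite !dsum csum.
under eq_bigr => k _ do rewrite !dsum csum.
under eq_bigr => k _ do under eq_bigr => l _ do rewrite !mderivZ mcoeffZ d2XX mulrDr.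
under eq_bigr => k _ do rewrite big_split /=.
rewrite big_split /= !sum2_delta mderiv_comm.
by rewrite -splitr subrr.
Qed.


Definition Phi (X : tensor3 K n) (f : P) : K :=
  \sum_u \sum_v \sum_w X u v w * ((((f^`M(w))^`M(v))^`M(u))@_0).

Lemma d3Xg (k u v w : 'I_n) (g : P) :
  (((('X_k * g)^`M(w))^`M(v))^`M(u))@_0 =
  (k == w)%:R * ((g^`M(v))^`M(u))@_0 + (k == v)%:R * ((g^`M(w))^`M(u))@_0
  + (k == u)%:R * ((g^`M(w))^`M(v))@_0.
Proof.
rewrite !(mderivM, mderivD, dX, mderivC) !(mcoeffD, c0M, c0C, c0X, mcoeff0).
ring.
Qed.

Lemma C1 (F : 'I_n -> 'I_n -> 'I_n -> K) (G : 'I_n -> 'I_n -> K) k :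
  \sum_u \sum_v \sum_w F u v w * ((k == w)%:R * G u v) = \sum_u \sum_v F u v k * G u v.
Proof.
apply: eq_bigr => u _; apply: eq_bigr => v _.
rewrite -(sum_delta (fun w => F u v w * G u v) k); apply: eq_bigr => w _.
by rewrite eq_sym; ring.
Qed.

Lemma C2 (F : 'I_n -> 'I_n -> K) (G : 'I_n -> K) k :
  \sum_v \sum_w F v w * ((k == v)%:R * G w) = \sum_w F k w * G w.
Proof.
rewrite -(sum_delta (fun v => \sum_w F v w * G w) k); apply: eq_bigr => v _.
rewrite mulr_suml; apply: eq_bigr => w _.
by rewrite eq_sym; ring.
Qed.

Lemma C3 (F : 'I_n -> 'I_n -> 'I_n -> K) (G : 'I_n -> 'I_n -> K) k :
  \sum_u \sum_v \sum_w F u v w * ((k == u)%:R * G v w) = \sum_v \sum_w F k v w * G v w.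
Proof.
rewrite -(sum_delta (fun u => \sum_v \sum_w F u v w * G v w) k); apply: eq_bigr => u _.
rewrite mulr_suml; apply: eq_bigr => v _.
rewrite mulr_suml; apply: eq_bigr => w _.
by rewrite eq_sym; ring.
Qed.

Lemma PhiXk (X : tensor3 K n) k (g : P) : sym3 X ->
  Phi X ('X_k * g) = 3%:R * \sum_u \sum_v X u v k * ((g^`M(v))^`M(u))@_0.
Proof.
move=> sX; rewrite /Phi.
under eq_bigr => u _ do under eq_bigr => v _ do under eq_bigr => w _ do
  rewrite d3Xg !mulrDr.
under eq_bigr => u _ do under eq_bigr => v _ do rewrite !big_split /=.
under eq_bigr => u _ do rewrite !big_split /=.
rewrite !big_split /= C1 C3.
under [X in _ + X + _]eq_bigr => u _ do rewrite C2.
have e2 : \sum_u \sum_w X u k w * ((g^`M(w))^`M(u))@_0 =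
          \sum_u \sum_v X u v k * ((g^`M(v))^`M(u))@_0.
  by apply: eq_bigr => u _; apply: eq_bigr => w _; rewrite (proj2 (sX u w k)).
have e3 : \sum_v \sum_w X k v w * ((g^`M(w))^`M(v))@_0 =
          \sum_u \sum_v X u v k * ((g^`M(v))^`M(u))@_0.
  apply: eq_bigr => u _; apply: eq_bigr => w _.
  by rewrite (proj1 (sX k u w)) (proj2 (sX u k w)).
rewrite e2 e3; ring.
Qed.

Lemma Phi_lin X c (f g : P) : Phi X (c *: f + g) = c * Phi X f + Phi X g.
Proof.
rewrite /Phi mulr_sumr -big_split; apply: eq_bigr => u _.
rewrite mulr_sumr -big_split; apply: eq_bigr => v _.
rewrite mulr_sumr -big_split; apply: eq_bigr => w _.
rewrite !(mderivD, mderivZ) mcoeffD mcoeffZ mulrDr mulrCA; reflexivity.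

Qed.

Lemma Phi0 X : Phi X 0 = 0.
Proof.
rewrite /Phi big1 // => u _; rewrite big1 // => v _; rewrite big1 // => w _.
by rewrite !mderiv0 mcoeff0 mulr0.
Qed.

Lemma PhiD X (f g : P) : Phi X (f + g) = Phi X f + Phi X g.
Proof. by rewrite -[f]scale1r Phi_lin mul1r scale1r. Qed.

Lemma PhiZ X c (f : P) : Phi X (c *: f) = c * Phi X f.
Proof. by rewrite -[c *: f]addr0 Phi_lin Phi0 addr0. Qed.

Lemma Phi_sum X (F : 'I_n -> P) : Phi X (\sum_k F k) = \sum_k Phi X (F k).
Proof. exact: (big_morph _ (PhiD X) (Phi0 X)). Qed.


Lemma poly_closure (Pr : P -> Prop) : Pr 0 -> Pr 1 -> (forall i, Pr 'X_i) ->
  (forall f g, Pr f -> Pr g -> Pr (f * g)) ->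
  (forall c f g, Pr f -> Pr g -> Pr (c *: f + g)) -> forall f, Pr f.
Proof.
move=> h0 h1 hX hM hL; elim/mpolyind => // c m p _ _ hp; apply: hL => //.
rewrite mpolyXE_id; apply: (big_ind Pr) => // i _.
elim: (m i) => [|k ih]; first by rewrite expr0.
by rewrite exprS; apply: hM.
Qed.


Definition T3 (f : P) (x y z : 'I_n) : K := (((f^`M(z))^`M(y))^`M(x))@_0.

Lemma T3_12 f x y z : T3 f x y z = T3 f y x z.
Proof. by rewrite /T3 mderiv_comm. Qed.
Lemma T3_23 f x y z : T3 f x y z = T3 f x z y.
Proof. by rewrite /T3 (mderiv_comm z y). Qed.

Definition Xs (u v w : 'I_n) : tensor3 K n := fun i j k =>
  (i == u)%:R * (j == v)%:R * (k == w)%:R + (i == u)%:R * (j == w)%:R * (k == v)%:R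
  + (i == v)%:R * (j == u)%:R * (k == w)%:R + (i == v)%:R * (j == w)%:R * (k == u)%:R
  + (i == w)%:R * (j == u)%:R * (k == v)%:R + (i == w)%:R * (j == v)%:R * (k == u)%:R.

Lemma Xs_sym u v w : sym3 (Xs u v w).
Proof. by move=> i j k; split; rewrite /Xs; ring. Qed.

Lemma sum3_delta (F : 'I_n -> 'I_n -> 'I_n -> K) x y z :
  \sum_i \sum_j \sum_k (i == x)%:R * (j == y)%:R * (k == z)%:R * F i j k = F x y z.
Proof.
rewrite -[RHS](sum_delta (fun i => F i y z) x); apply: eq_bigr => i _.
rewrite -(sum_delta (fun j => F i j z) y) mulr_suml; apply: eq_bigr => j _.
rewrite -(sum_delta (fun k => F i j k) z) !mulr_suml; apply: eq_bigr => k _.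
ring.
Qed.

Lemma PhiXs u v w (f : P) : Phi (Xs u v w) f = 6%:R * T3 f u v w.
Proof.
rewrite /Phi /Xs.
under eq_bigr => i _ do under eq_bigr => j _ do under eq_bigr => k _ do
  rewrite !mulrDl.
under eq_bigr => i _ do under eq_bigr => j _ do rewrite !big_split /=.
under eq_bigr => i _ do rewrite !big_split /=.
rewrite !big_split /=.
rewrite !(sum3_delta (fun i j k => (((f^`M(k))^`M(j))^`M(i))@_0)).
rewrite -!/(T3 f _ _ _).
rewrite (T3_23 f u w v) (T3_12 f v u w) (T3_23 f v w u) (T3_12 f v u w).
rewrite (T3_12 f w u v) (T3_23 f u w v) (T3_23 f w v u) (T3_12 f w u v) (T3_23 f u w v).
ring.
Qed.

End MP.

Section BR.
Variables (K : numFieldType) (n : nat).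
Local Notation P := {mpoly K[n]}.
Variable br : P -> P -> P.
Hypothesis Hpp : pre_poisson br.

Lemma brDZl a f g h : br (a *: f + g) h = a *: br f h + br g h.
Proof. by case: Hpp. Qed.
Lemma skew f g : br f g = - br g f.
Proof. by case: Hpp. Qed.
Lemma leib f g h : br (f * g) h = f * br g h + g * br f h.
Proof. by case: Hpp. Qed.

Lemma br0l h : br 0 h = 0.
Proof.
have := brDZl 1 0 0 h; rewrite scale1r !addr0 scale1r.
by move/(congr1 (fun x => x - br 0 h)); rewrite addrK subrr => <-.
Qed.
Lemma brDl f g h : br (f + g) h = br f h + br g h.
Proof. by have := brDZl 1 f g h; rewrite !scale1r. Qed.
Lemma brZl a f h : br (a *: f) h = a *: br f h.
Proof. by have := brDZl a f 0 h; rewrite !addr0 br0l addr0. Qed.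
Lemma brNl f h : br (- f) h = - br f h.
Proof. by rewrite -scaleN1r brZl scaleN1r. Qed.
Lemma br0r h : br h 0 = 0.
Proof. by rewrite skew br0l oppr0. Qed.
Lemma brDr f g h : br f (g + h) = br f g + br f h.
Proof. by rewrite skew brDl opprD -!skew. Qed.
Lemma brZr a f h : br h (a *: f) = a *: br h f.
Proof. by rewrite skew brZl -scalerN -skew. Qed.
Lemma brNr f h : br h (- f) = - br h f.
Proof. by rewrite skew brNl opprK skew. Qed.
Lemma brMr f g h : br f (g * h) = g * br f h + h * br f g.
Proof. by rewrite skew leib opprD -!mulrN -!skew. Qed.
Lemma br1l h : br 1 h = 0.
Proof.
have := leib 1 1 h; rewrite mulr1 mul1r.
by move/(congr1 (fun x => x - br 1 h)); rewrite addrK subrr => <-.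
Qed.
Lemma brCl c h : br c%:MP h = 0.
Proof. by rewrite -alg_mpolyC brZl br1l scaler0. Qed.
Lemma brCr c h : br h c%:MP = 0.
Proof. by rewrite skew brCl oppr0. Qed.
Lemma br_sumr f (F : 'I_n -> P) : br f (\sum_k F k) = \sum_k br f (F k).
Proof. exact: (big_morph _ (brDr f) (br0r f)). Qed.

Definition Jb f g h := br f (br g h) + br g (br h f) + br h (br f g).

Lemma Jcyc f g h : Jb f g h = Jb g h f.
Proof. rewrite /Jb; ring. Qed.

Lemma Jlin a f f' g h : Jb (a *: f + f') g h = a *: Jb f g h + Jb f' g h.
Proof.
rewrite /Jb brDZl !brDr !brZr !brDZl !brDr !brZr.
rewrite !scalerDr; ring.
Qed.

Lemma J0 g h : Jb 0 g h = 0.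
Proof. by rewrite /Jb !(br0l, br0r) !addr0. Qed.

Lemma J1 g h : Jb 1 g h = 0.
Proof. by rewrite /Jb !br1l br0r -[1]/(1%:MP) brCr !br0r !addr0. Qed.

Lemma JM f1 f2 g h : Jb (f1 * f2) g h = f1 * Jb f2 g h + f2 * Jb f1 g h.
Proof.
rewrite /Jb leib (brMr h f1 f2) brDr !brMr leib brDr !brMr.
rewrite (skew f2 g) (skew f1 g) !brNr.
ring.
Qed.


Lemma Jgen : (forall a b c, Jb 'X_a 'X_b 'X_c = 0) -> jacobi br.
Proof.
move=> hg.
have s1 : forall f i j, Jb f 'X_i 'X_j = 0.
  apply: (poly_closure (Pr := fun f => forall i j, Jb f 'X_i 'X_j = 0)).
  - by move=> i j; rewrite J0.
  - by move=> i j; rewrite J1.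
  - by [].
  - by move=> f g hf hg' i j; rewrite JM hf hg' !mulr0 addr0.
  - by move=> c f g hf hg' i j; rewrite Jlin hf hg' scaler0 addr0.
have s2 : forall g i f, Jb g 'X_i f = 0.
  apply: (poly_closure (Pr := fun g => forall i f, Jb g 'X_i f = 0)).
  - by move=> i f; rewrite J0.
  - by move=> i f; rewrite J1.
  - by move=> j i f; rewrite Jcyc Jcyc s1.
  - by move=> f g hf hg' i j; rewrite JM hf hg' !mulr0 addr0.
  - by move=> c f g hf hg' i j; rewrite Jlin hf hg' scaler0 addr0.
have s3 : forall h f g, Jb h f g = 0.
  apply: (poly_closure (Pr := fun h => forall f g, Jb h f g = 0)).
  - by move=> f g; rewrite J0.
  - by move=> f g; rewrite J1.
  - by move=> i f g; rewrite Jcyc Jcyc s2.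
  - by move=> f g hf hg' i j; rewrite JM hf hg' !mulr0 addr0.
  - by move=> c f g hf hg' i j; rewrite Jlin hf hg' scaler0 addr0.
by move=> f g h; apply: s3.
Qed.

End BR.

Section QB.
Variables (K : numFieldType) (n : nat).
Local Notation P := {mpoly K[n]}.
Variable br : P -> P -> P.
Hypothesis Hpp : pre_poisson br.
Hypothesis Hq : quadratic_bracket br.

Local Notation q a b := (br 'X_a 'X_b).

Definition H (a b k l : 'I_n) : K := ((((q a b)^`M(l))^`M(k))@_0 / 2%:R).
Definition E (X : tensor3 K n) (a l k : 'I_n) : K :=
  \sum_u \sum_v X u k v * H a l u v.

Lemma X1homog (i : 'I_n) : ('X_i : P) \is 1.-homog.
Proof. by rewrite dhomogX; apply/eqP; exact: mdeg1. Qed.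

Lemma q_homog a b : q a b \is 2.-homog.
Proof. by apply: Hq; apply: X1homog. Qed.

Lemma q_recon a b : q a b = \sum_k \sum_l H a b k l *: ('X_k * 'X_l).
Proof. exact: (recon2 (q_homog a b)). Qed.

Lemma Hanti a b k l : H a b k l = - H b a k l.
Proof. by rewrite /H (skew Hpp 'X_a) !mderivN mcoeffN mulNr. Qed.

Lemma Eanti X a l k : E X a l k = - E X l a k.
Proof.
rewrite /E -sumrN; apply: eq_bigr => u _; rewrite -sumrN; apply: eq_bigr => v _.
by rewrite Hanti mulrN.
Qed.

Lemma brXq a b c : br 'X_a (q b c) =
  \sum_k \sum_l H b c k l *: ('X_k * q a l + 'X_l * q a k).
Proof.
rewrite {1}q_recon (br_sumr Hpp); apply: eq_bigr => k _.
rewrite (br_sumr Hpp); apply: eq_bigr => l _.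
by rewrite (brZr Hpp) (brMr Hpp).
Qed.

Lemma Jhomog a b c : Jb br 'X_a 'X_b 'X_c \is 3.-homog.
Proof.
have h : forall a b c, br 'X_a (q b c) \is 3.-homog.
  move=> a' b' c'; rewrite brXq rpred_sum // => k _; rewrite rpred_sum // => l _.
  rewrite rpredZ // rpredD //.
  - have : ('X_k * q a' l : P) \is (1+2).-homog.
      by apply: dhomogM; [apply: X1homog | apply: q_homog].
    by [].
  - have : ('X_l * q a' k : P) \is (1+2).-homog.
      by apply: dhomogM; [apply: X1homog | apply: q_homog].
    by [].
by rewrite /Jb !rpredD // h.
Qed.

Lemma PhiXq X k a l : sym3 X -> Phi X ('X_k * q a l) = 6%:R * E X a l k.
Proof.
move=> sX; rewrite PhiXk // /E !mulr_sumr; apply: eq_bigr => u _.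
rewrite !mulr_sumr; apply: eq_bigr => v _.
have e : ((((q a l)^`M(v))^`M(u))@_0) = 2%:R * H a l u v.
  by rewrite /H mulrC divfK // pnatr_eq0.
rewrite e -(proj2 (sX u k v)); ring.
Qed.

Lemma PhiBr X a b c : sym3 X -> Phi X (br 'X_a (q b c)) =
  6%:R * \sum_k \sum_l H b c k l * (E X a l k + E X a k l).
Proof.
move=> sX; rewrite brXq Phi_sum mulr_sumr; apply: eq_bigr => k _.
rewrite Phi_sum mulr_sumr; apply: eq_bigr => l _.
rewrite PhiZ PhiD !PhiXq //; ring.
Qed.

End QB.

Section SCH.
Variables (K : numFieldType) (n : nat).
Local Notation P := {mpoly K[n]}.
Variable br : P -> P -> P.
Hypothesis Hpp : pre_poisson br.
Variable D : {linear 'M[K]_n -> 'M[K]_n}.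
Hypothesis hD : extends_delta br D.

Lemma Dmx (f : 'I_n -> 'I_n -> K) a b : (forall i j, f i j = f j i) ->
  D (\matrix_(i, j) f i j) a b = \sum_k \sum_l f k l * H br a b k l.
Proof.
move=> sf; rewrite hD; last by move=> i j; rewrite !mxE.
rewrite /delta mxE /pair_sym; apply: eq_bigr => k _; apply: eq_bigr => l _.
by rewrite mxE.
Qed.

Lemma Dmx2 (f g : 'I_n -> 'I_n -> K) a b :
  (forall i j, f i j + g i j = f j i + g j i) ->
  D (\matrix_(i, j) f i j) a b + D (\matrix_(i, j) g i j) a b =
  \sum_k \sum_l (f k l + g k l) * H br a b k l.
Proof.
move=> sf; rewrite -(Dmx (f := fun i j => f i j + g i j)) //.
have e : \matrix_(i, j) (f i j + g i j) = \matrix_(i, j) f i j + \matrix_(i, j) g i j.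
  by apply/matrixP => i j; rewrite !mxE.
by rewrite e raddfD mxE.
Qed.

Lemma Dmx2B (f g : 'I_n -> 'I_n -> K) a b :
  (forall i j, f i j - g i j = f j i - g j i) ->
  D (\matrix_(i, j) f i j) a b - D (\matrix_(i, j) g i j) a b =
  \sum_k \sum_l (f k l - g k l) * H br a b k l.
Proof.
move=> sf; rewrite -(Dmx (f := fun i j => f i j - g i j)) //.
have e : \matrix_(i, j) (f i j - g i j) = \matrix_(i, j) f i j - \matrix_(i, j) g i j.
  by apply/matrixP => i j; rewrite !mxE.
by rewrite e raddfB !mxE.
Qed.

Lemma op12_ext (Y : tensor3 K n) (Y' : 'I_n -> 'I_n -> K) a b c :
  (forall i j, Y i j c = Y' i j) -> op12 D Y a b c = D (\matrix_(i, j) Y' i j) a b.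
Proof. by move=> h; rewrite /op12; congr (D _ a b); apply/matrixP => i j; rewrite !mxE h. Qed.

Lemma op13_ext (Y : tensor3 K n) (Y' : 'I_n -> 'I_n -> K) a b c :
  (forall i k, Y i b k = Y' i k) -> op13 D Y a b c = D (\matrix_(i, k) Y' i k) a c.
Proof. by move=> h; rewrite /op13; congr (D _ a c); apply/matrixP => i j; rewrite !mxE h. Qed.

Lemma op23_ext (Y : tensor3 K n) (Y' : 'I_n -> 'I_n -> K) a b c :
  (forall j k, Y a j k = Y' j k) -> op23 D Y a b c = D (\matrix_(j, k) Y' j k) b c.
Proof. by move=> h; rewrite /op23; congr (D _ b c); apply/matrixP => i j; rewrite !mxE h. Qed.

Variable X : tensor3 K n.
Hypothesis sX : sym3 X.

Lemma s12 i j k : X i j k = X j i k. Proof. exact: (proj1 (sX i j k)). Qed.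
Lemma s23 i j k : X i j k = X i k j. Proof. exact: (proj2 (sX i j k)). Qed.

Lemma op12E i j c : op12 D X i j c = E br X i j c.
Proof.
rewrite /op12 Dmx; last by move=> k l; rewrite s12.
rewrite /E; apply: eq_bigr => k _; apply: eq_bigr => l _; by rewrite s23.
Qed.

Lemma op13E i j c : op13 D X i j c = E br X i c j.
Proof.
rewrite /op13 Dmx //; move=> k l; by rewrite s12 s23 s12.
Qed.

Lemma op23E i j c : op23 D X i j c = E br X j c i.
Proof.
rewrite /op23 Dmx; last by move=> k l; rewrite s23.
rewrite /E; apply: eq_bigr => k _; apply: eq_bigr => l _; by rewrite s12.
Qed.

Lemma G12 a b c : op12 D (op13 D X) a b c + op12 D (op23 D X) a b c =
  \sum_i \sum_j (E br X i c j + E br X j c i) * H br a b i j.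
Proof.
rewrite (op12_ext (Y' := fun i j => E br X i c j)); last by move=> i j; rewrite op13E.
rewrite (op12_ext (Y' := fun i j => E br X j c i)); last by move=> i j; rewrite op23E.
by rewrite Dmx2 // => i j; rewrite addrC.
Qed.

Lemma G13 a b c : op13 D (op12 D X) a b c - op13 D (op23 D X) a b c =
  \sum_i \sum_k (E br X i b k - E br X b k i) * H br a c i k.
Proof.
rewrite (op13_ext (Y' := fun i k => E br X i b k)); last by move=> i k; rewrite op12E.
rewrite (op13_ext (Y' := fun i k => E br X b k i)); last by move=> i k; rewrite op23E.
rewrite Dmx2B // => i j.
rewrite (Eanti Hpp X i b j) (Eanti Hpp X j b i); ring.
Qed.

Lemma G23 a b c : op23 D (op12 D X) a b c + op23 D (op13 D X) a b c =
  \sum_j \sum_k (E br X a j k + E br X a k j) * H br b c j k.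
Proof.
rewrite (op23_ext (Y' := fun j k => E br X a j k)); last by move=> j k; rewrite op12E.
rewrite (op23_ext (Y' := fun j k => E br X a k j)); last by move=> j k; rewrite op13E.
by rewrite Dmx2 // => i j; rewrite addrC.
Qed.

Lemma SchE a b c : schouten D X a b c =
  \sum_i \sum_j (E br X i c j + E br X j c i) * H br a b i j
  - \sum_i \sum_k (E br X i b k - E br X b k i) * H br a c i k
  - \sum_j \sum_k (E br X a j k + E br X a k j) * H br b c j k.
Proof.
rewrite -G12 -G13 -G23 /schouten /comm3; ring.
Qed.

End SCH.

Section REL.
Variables (K : numFieldType) (n : nat).
Local Notation P := {mpoly K[n]}.
Variable br : P -> P -> P.
Hypothesis Hpp : pre_poisson br.
Hypothesis Hq : quadratic_bracket br.
Variable D : {linear 'M[K]_n -> 'M[K]_n}.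
Hypothesis hD : extends_delta br D.
Variable X : tensor3 K n.
Hypothesis sX : sym3 X.

Lemma SchPhi a b c :
  6%:R * schouten D X a b c = - Phi X (Jb br 'X_a 'X_b 'X_c).
Proof.
rewrite (SchE Hpp hD sX) /Jb !PhiD !(PhiBr Hpp Hq) //.
have e1 : \sum_i \sum_j (E br X i c j + E br X j c i) * H br a b i j =
  - \sum_k \sum_l H br a b k l * (E br X c l k + E br X c k l).
  rewrite -sumrN; apply: eq_bigr => i _; rewrite -sumrN; apply: eq_bigr => j _.
  rewrite (Eanti Hpp X i c j) (Eanti Hpp X j c i); ring.
have e2 : \sum_i \sum_k (E br X i b k - E br X b k i) * H br a c i k =
  \sum_k \sum_l H br c a k l * (E br X b l k + E br X b k l).
  apply: eq_bigr => i _; apply: eq_bigr => j _.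
  rewrite (Eanti Hpp X i b j) (Hanti Hpp a c); ring.
have e3 : \sum_j \sum_k (E br X a j k + E br X a k j) * H br b c j k =
  \sum_k \sum_l H br b c k l * (E br X a l k + E br X a k l).
  apply: eq_bigr => i _; apply: eq_bigr => j _; ring.
rewrite e1 e2 e3; ring.
Qed.

End REL.

From Stdlib Require Import FunctionalExtensionality.
Unset Implicit Arguments.

Lemma six_neq0 (K : numFieldType) : (6%:R : K) != 0.
Proof. by rewrite pnatr_eq0. Qed.

Theorem theorem2 (K : numFieldType) (n : nat)
    (mul : 'rV[K]_n -> 'rV[K]_n -> 'rV[K]_n)
    (br : {mpoly K[n]} -> {mpoly K[n]} -> {mpoly K[n]}) :
  assoc_algebra mul -> pre_poisson br -> quadratic_bracket br ->
  (forall D1 D2 : {linear 'M[K]_n -> 'M[K]_n},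
     extends_delta br D1 -> extends_delta br D2 ->
     forall X : tensor3 K n, sym3 X -> schouten D1 X = schouten D2 X) /\
  (forall D : {linear 'M[K]_n -> 'M[K]_n}, extends_delta br D ->
     (jacobi br <-> forall X : tensor3 K n, sym3 X -> schouten D X = (fun _ _ _ => 0))).
Proof.
move=> _ Hpp Hq; split.
  move=> D1 D2 h1 h2 X sX.
  apply: functional_extensionality => a; apply: functional_extensionality => b.
  apply: functional_extensionality => c.
  apply: (mulfI (six_neq0 K)).
  by rewrite (SchPhi Hpp Hq h1 sX) (SchPhi Hpp Hq h2 sX).
move=> D hD; split.
  move=> hJ X sX.
  apply: functional_extensionality => a; apply: functional_extensionality => b.
  apply: functional_extensionality => c.
  apply: (mulfI (six_neq0 K)).
  by rewrite (SchPhi Hpp Hq hD sX) /Jb hJ Phi0 oppr0 mulr0.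
move=> hS; apply: (Jgen Hpp) => a b c.
apply: (homog_van (Jhomog Hpp Hq a b c)) => m hm.
have [u [m1 [-> h1]]] := mdeg_decomp hm.
have [v [m2 [-> h2]]] := mdeg_decomp h1.
have [w [m0 [-> h0]]] := mdeg_decomp h2.
have -> : m0 = 0%MM by apply/eqP; rewrite -mdeg_eq0 h0.
rewrite !mderivmDm mderivm0m !mderivmU1m.
have := SchPhi Hpp Hq hD (@Xs_sym K n u v w) a b c.
rewrite (hS _ (@Xs_sym K n u v w)) mulr0 PhiXs => /esym /eqP.
by rewrite oppr_eq0 mulf_eq0 (negbTE (six_neq0 K)) /= => /eqP.
Qed.
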